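(* There is a constant $c>0$ such that for every $n\ge 3$ and every initial coloring of the cycle $C_n$, the stabilization time of the Random Majority Model (RMM) on $C_n$ is at most $c n^2$; i.e., the stabilization time of RMM on $C_n$ is in $\mathcal{O}(n^2)$.
   Context: A coloring of a graph is a map from its nodes to $\{b,w\}$. In the Random Majority Model (RMM), all nodes update simultaneously in each round: a node adopts the color strictly more frequent among its neighbors in the previous round, and in case of a tie it chooses blue or white independently and uniformly at random. RMM is a Markov chain on colorings; in the directed graph on colorings with an edge $s\to s'$ whenever the transition has positive probability, an absorbing component is a maximal strongly connected component with no outgoing edge. The stabilization time is the expected number of rounds until the process reaches an absorbing component. *)

(* Defs.v *)
From HB Require Import structures.
From mathcomp Require Import all_boot all_order all_algebra.
From mathcomp Require Import all_classical all_reals all_analysis.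
Set Implicit Arguments. Unset Strict Implicit. Unset Printing Implicit Defensive.
Import Order.TTheory GRing.Theory Num.Theory.
Local Open Scope ring_scope.

(* Colors: true = blue, false = white. A coloring of the graph on node set V. *)
Definition coloring (V : finType) := {ffun V -> bool}.

Section RMM.
Variables (R : realType) (V : finType) (adj : rel V).

Definition nbcount (s : coloring V) (v : V) (c : bool) : nat :=
  #|[set u | adj v u & s u == c]|.

Definition node_prob (s : coloring V) (v : V) (c : bool) : R :=
  let nb := nbcount s v true in
  let nw := nbcount s v false in
  if (nw < nb)%N then (if c then 1 else 0)
  else if (nb < nw)%N then (if c then 0 else 1)
  else 1 / 2.

(* RMM transition probability: all nodes update simultaneously and independently *)
Definition rmm_trans (s s' : coloring V) : R := \prod_(v : V) node_prob s v (s' v).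

Definition rmm_edge : rel (coloring V) := fun s s' => 0 < rmm_trans s s'.

(* s lies in an absorbing component: its strongly connected component
   (maximal strongly connected set containing s) has no outgoing edge *)
Definition in_scc (s t : coloring V) : bool :=
  connect rmm_edge s t && connect rmm_edge t s.

Definition absorbing (s : coloring V) : bool :=
  [forall t, forall t', (in_scc s t && rmm_edge t t') ==> in_scc s t'].

(* q t s' = P(X_t = s' and X_0,...,X_t all outside absorbing components),
   starting from X_0 = s0 *)
Fixpoint survive (s0 : coloring V) (t : nat) : {ffun coloring V -> R} :=
  match t with
  | 0 => [ffun s => if (s == s0) && ~~ absorbing s then 1 else 0]
  | t'.+1 => [ffun s' => if absorbing s' then 0
                         else \sum_(s : coloring V) survive s0 t' s * rmm_trans s s']
  end.

(* expected number of rounds until an absorbing component is reached: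
   E[T] = sum_{t >= 0} P(T > t), as an extended real (may be +oo) *)
Definition stab_time (s0 : coloring V) : \bar R :=
  (\sum_(0 <= t <oo) ((\sum_(s : coloring V) survive s0 t s)%:E))%E.

End RMM.

Definition cycle_adj (n : nat) : rel 'I_n :=
  fun u v => ((val v == (val u).+1 %% n) || (val u == (val v).+1 %% n))%N.

(* Main.v *)
Require Import Defs.
From HB Require Import structures.
From mathcomp Require Import all_boot all_order all_algebra.
From mathcomp Require Import all_classical all_reals all_analysis.
From mathcomp Require Import zify ring lra.
Set Implicit Arguments. Unset Strict Implicit. Unset Printing Implicit Defensive.
Import Order.TTheory GRing.Theory Num.Theory.
Local Open Scope ring_scope.

Lemma adjE n (v u : 'I_n) : cycle_adj v u = (u == ordS v) || (u == ord_pred v).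
Proof.
rewrite /cycle_adj; congr (_ || _).
rewrite -(inj_eq (@ordS_inj n)) ord_predK eq_sym; by [].
Qed.

Lemma ordS_neq_pred n (H : (2 < n)%N) (v : 'I_n) : ordS v != ord_pred v.
Proof.
apply/negP => /eqP E.
have := congr1 (@ordS n) E; rewrite ord_predK => /(congr1 val) /=.
have := ltn_ord v; move: (val v) => k kn.
case: (ltnP k.+1 n) => h.
  rewrite (modn_small h); case: (ltnP k.+2 n) => h2.
    by rewrite modn_small //; lia.
  have -> : k.+2 = n by lia.
  rewrite modnn; lia.
have -> : k.+1 = n by lia.
rewrite modnn modn_small; lia.
Qed.

Lemma nbcountE n (H : (2 < n)%N) (s : coloring 'I_n) v c :
  nbcount (@cycle_adj n) s v c = ((s (ordS v) == c) + (s (ord_pred v) == c))%N.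
Proof.
have hn := ordS_neq_pred H v.
rewrite /nbcount.
have -> : [set u | cycle_adj v u & s u == c] =
   [set u in [set ordS v; ord_pred v] | s u == c].
  by apply/setP => u; rewrite !inE adjE.
have hn' : ord_pred v != ordS v by rewrite eq_sym.
case e1: (s (ordS v) == c); case e2: (s (ord_pred v) == c);
 [ rewrite (_ : [set _ in _ | _] = [set ordS v; ord_pred v]) ?cards2 ?hn //
 | rewrite (_ : [set _ in _ | _] = [set ordS v]) ?cards1 //
 | rewrite (_ : [set _ in _ | _] = [set ord_pred v]) ?cards1 //
 | rewrite (_ : [set _ in _ | _] = finset.set0) ?cards0 // ];
 apply/setP => u; rewrite !inE; (have [->|nu1] := eqP);
 rewrite /= ?e1 ?e2 ?(negPf hn) ?(negPf hn') ?andbF ?andbT //;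
 (have [->|nu2] := eqP); rewrite /= ?e1 ?e2 ?andbF ?andbT //.
Qed.

Lemma node_probE (R : realType) n (H : (2 < n)%N) (s : coloring 'I_n) v c :
  node_prob R (@cycle_adj n) s v c =
  if s (ordS v) == s (ord_pred v) then (c == s (ordS v))%:R else 1 / 2.
Proof.
rewrite /node_prob !nbcountE //.
by case: (s (ordS v)); case: (s (ord_pred v)); case: c.
Qed.
Lemma prod_if1 (R : realType) (V : finType) (u : V) (X : V -> R) :
  \prod_w (if w == u then X w else 1) = X u.
Proof. by rewrite -big_mkcond big_pred1_eq. Qed.

Lemma pair_marg (R : realType) (V : finType) (p : V -> bool -> R)
  (hp : forall w, p w true + p w false = 1) u v (uv : u != v) a b :
  \sum_(g : {ffun V -> bool}) (\prod_w p w (g w)) * ((g u == a) && (g v == b))%:R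
   = p u a * p v b.
Proof.
pose p' := fun w c => p w c * (if w == u then (c == a)%:R else 1)
            * (if w == v then (c == b)%:R else 1) : R.
transitivity (\sum_(g : {ffun V -> bool}) \prod_w p' w (g w)).
  apply: eq_bigr => g _; rewrite /p' !big_split /=.
  rewrite (prod_if1 u (fun w => (g w == a)%:R)) (prod_if1 v (fun w => (g w == b)%:R)).
  by rewrite -mulrA -natrM mulnb.
rewrite -bigA_distr_bigA.
transitivity (\prod_w ((if w == u then p u a else 1) * (if w == v then p v b else 1))).
  apply: eq_bigr => w _; rewrite big_bool /p'; clear p'.
  case: (w =P u) => [wu|wu]; case: (w =P v) => [wv|wv].
  - by move: uv; rewrite -wu -wv eqxx.
  - by rewrite wu; case: a; rewrite /= ?mulr1 ?mulr0 ?add0r ?addr0.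
  - by rewrite wv; case: b; rewrite /= ?mulr1 ?mulr0 ?add0r ?addr0 ?mul1r.
  - rewrite !mulr1; exact: (hp w).
by rewrite big_split /= (prod_if1 u (fun _ => p u a)) (prod_if1 v (fun _ => p v b)).
Qed.

Definition fpot (R : realType) n (s : coloring 'I_n) : R :=
  4 * \sum_u \sum_v ((s u)%:R * (1 - (s v)%:R)).

Lemma sum_quad (R : realType) n (x : 'I_n -> R) :
  \sum_u \sum_v x u * (1 - x v) = (\sum_u x u) * (n%:R - \sum_v x v).
Proof.
rewrite mulr_suml; apply: eq_bigr => u _; rewrite -mulr_sumr; congr (_ * _).
by rewrite sumrB sumr_const card_ord.
Qed.

Lemma np_sum1 (R : realType) n (H : (2 < n)%N) (s : coloring 'I_n) w :
  node_prob R (@cycle_adj n) s w true + node_prob R (@cycle_adj n) s w false = 1.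
Proof.
rewrite !node_probE //; case: (_ == _); last by lra.
by case: (s (ordS w)); rewrite /= ?addr0 ?add0r.
Qed.

Lemma trans_marg (R : realType) n (H : (2 < n)%N) (s : coloring 'I_n) u v :
  u != v ->
  \sum_g rmm_trans R (@cycle_adj n) s g * ((g u)%:R * (1 - (g v)%:R)) =
  node_prob R (@cycle_adj n) s u true * (1 - node_prob R (@cycle_adj n) s v true).
Proof.
move=> uv.
have -> : 1 - node_prob R (@cycle_adj n) s v true = node_prob R (@cycle_adj n) s v false.
  by rewrite -(np_sum1 R H s v) addrAC subrr add0r.
rewrite -(pair_marg (np_sum1 R H s) uv true false).
apply: eq_bigr => g _; rewrite /rmm_trans; congr (_ * _).
by case: (g u); case: (g v); rewrite /= ?subr0 ?subrr ?mulr0 ?mulr1.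
Qed.

Lemma expectE (R : realType) n (H : (2 < n)%N) (s : coloring 'I_n) :
  let q := fun u => node_prob R (@cycle_adj n) s u true in
  \sum_g rmm_trans R (@cycle_adj n) s g * fpot R g =
  4 * (\sum_u \sum_v q u * (1 - q v) - \sum_u q u * (1 - q u)).
Proof.
move=> q; rewrite /fpot.
under eq_bigr do rewrite mulrCA mulr_sumr.
rewrite -mulr_sumr; congr (4 * _).
rewrite exchange_big -sumrB; apply: eq_bigr => u _.
under eq_bigr do rewrite mulr_sumr.
rewrite exchange_big /= (bigD1 u) //= [X in _ = X - _](bigD1 u) //=.
rewrite big1; last first.
  move=> g _; case: (g u) => /=; [by rewrite subrr !mulr0 | by rewrite !mul0r mulr0].
rewrite add0r addrC addrK; apply: eq_bigr => v vu.
by rewrite trans_marg // eq_sym.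
Qed.

Lemma q_sum (R : realType) n (H : (2 < n)%N) (s : coloring 'I_n) :
  \sum_u node_prob R (@cycle_adj n) s u true = \sum_u (s u)%:R.
Proof.
transitivity (\sum_u (((s (ordS u))%:R + (s (ord_pred u))%:R) / 2 : R)).
  apply: eq_bigr => u _; rewrite node_probE //.
  by case: (s (ordS u)); case: (s (ord_pred u)); rewrite /= ?mulr1n ?mulr0n; lra.
have e1 : \sum_u ((s (ordS u))%:R : R) = \sum_u (s u)%:R.
  by rewrite [RHS](reindex_inj (@ordS_inj n)).
have e2 : \sum_u ((s (ord_pred u))%:R : R) = \sum_u (s u)%:R.
  by rewrite [RHS](reindex_inj (@ord_pred_inj n)).
rewrite -mulr_suml big_split /= e1 e2; lra.
Qed.

Definition good n (s : coloring 'I_n) := [forall v, s (ordS v) == s (ord_pred v)].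

Lemma drift (R : realType) n (H : (2 < n)%N) (s : coloring 'I_n) :
  ~~ good s ->
  \sum_g rmm_trans R (@cycle_adj n) s g * fpot R g <= fpot R s - 1.
Proof.
move=> ng; rewrite expectE // sum_quad q_sum //.
have -> : fpot R s = 4 * ((\sum_u (s u)%:R) * (n%:R - \sum_u (s u)%:R)).
  by rewrite /fpot sum_quad.
set B := \sum_u _.
have qE u : node_prob R (@cycle_adj n) s u true * (1 - node_prob R (@cycle_adj n) s u true) = if s (ordS u) == s (ord_pred u) then 0 else 1/4.
  rewrite node_probE //; case: (_ == _); last first.
    rewrite (_ : 1 - 1/2 = 1/2 :> R); last by field.
    by field.
  by case: (s (ordS u)); rewrite /= ?subrr ?mulr0 ?mul0r.
have [v /negPf hv] : exists v, s (ordS v) != s (ord_pred v).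
  by apply/existsP; rewrite -negb_forall.
have : 1/4 <= \sum_u node_prob R (@cycle_adj n) s u true * (1 - node_prob R (@cycle_adj n) s u true).
  rewrite (bigD1 v) //= qE hv lerDl; apply: sumr_ge0 => u _; rewrite qE.
  by case: (_ == _).
lra.
Qed.

Definition Fsh n (s : coloring 'I_n) : coloring 'I_n := [ffun v => s (ordS v)].

Lemma Fsh_inj n : injective (@Fsh n).
Proof.
move=> s1 s2 e; apply/ffunP => w.
have := congr1 (fun g : coloring 'I_n => g (ord_pred w)) e.
by rewrite /Fsh !ffunE ord_predK.
Qed.

Lemma good_F n (s : coloring 'I_n) : good s -> good (Fsh s).
Proof.
move=> /forallP g; apply/forallP => v; rewrite /Fsh !ffunE ord_predK.
by have := g (ordS v); rewrite ordSK.
Qed.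

Lemma good_edge (R : realType) n (H : (2 < n)%N) (s t : coloring 'I_n) :
  good s -> rmm_edge R (@cycle_adj n) s t = (t == Fsh s).
Proof.
move=> /forallP g; rewrite /rmm_edge /rmm_trans.
have -> : \prod_v node_prob R (@cycle_adj n) s v (t v) = \prod_v ((t v == s (ordS v))%:R : R).
  by apply: eq_bigr => v _; rewrite node_probE // (eqP (g v)) eqxx.
case: (boolP (t == Fsh s)) => [/eqP -> | ne].
  by rewrite big1 ?ltr01 // => v _; rewrite /Fsh ffunE eqxx.
have [v hv] : exists v, t v != s (ordS v).
  apply/existsP; apply: contraR ne; rewrite negb_exists => /forallP h.
  by apply/eqP/ffunP => v; rewrite /Fsh ffunE; apply/eqP; have := h v; rewrite negbK.
by rewrite (bigD1 v) //= (negPf hv) mul0r ltxx.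
Qed.

Lemma good_connect (R : realType) n (H : (2 < n)%N) (s t : coloring 'I_n) :
  good s -> connect (rmm_edge R (@cycle_adj n)) s t -> fconnect (@Fsh n) s t && good t.
Proof.
move=> gs /connectP [p pth ->]; elim: p s gs pth => [|x p IH] s gs /=.
  by rewrite connect0.
move=> /andP [e pth]; rewrite good_edge // in e; move/eqP: e => e.
have gx : good x by rewrite e; apply: good_F.
have /andP [c gl] := IH x gx pth; rewrite gl andbT.
by apply: connect_trans c; apply: connect1; rewrite /= e.
Qed.

Lemma good_fconnect (R : realType) n (H : (2 < n)%N) (s t : coloring 'I_n) :
  good s -> fconnect (@Fsh n) s t -> connect (rmm_edge R (@cycle_adj n)) s t.
Proof.
move=> gs /connectP [p pth ->]; elim: p s gs pth => [|x p IH] s gs /=.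
  by rewrite connect0.
move=> /andP [/eqP e pth].
have gx : good x by rewrite -e; apply: good_F.
apply: connect_trans (IH x gx pth); apply: connect1.
by rewrite good_edge // e.
Qed.

Lemma good_absorbing (R : realType) n (H : (2 < n)%N) (s : coloring 'I_n) :
  good s -> absorbing R (@cycle_adj n) s.
Proof.
move=> gs; apply/forallP => t; apply/forallP => t'; apply/implyP.
move=> /andP [/andP [st ts] tt'].
have /andP [fst gt] := good_connect H gs st.
rewrite good_edge // in tt'; move/eqP: tt' => ->.
apply/andP; split.
  by apply: connect_trans st _; apply: connect1; rewrite good_edge.
apply: good_fconnect => //; first exact: good_F.
rewrite (fconnect_sym (@Fsh_inj n)).
by apply: (connect_trans fst); apply: connect1 => /=.
Qed.

Lemma node_prob_ge0 (R : realType) (V : finType) (adj : rel V) s v c :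
  0 <= node_prob R adj s v c.
Proof. by rewrite /node_prob; do 3?case: ifP => _ //; case: c. Qed.

Lemma trans_ge0 (R : realType) (V : finType) (adj : rel V) s s' :
  0 <= rmm_trans R adj s s'.
Proof. by apply: prodr_ge0 => v _; apply: node_prob_ge0. Qed.

Lemma survive_ge0 (R : realType) (V : finType) (adj : rel V) s0 t s :
  0 <= survive R adj s0 t s.
Proof.
elim: t s => [|t IH] s /=; rewrite ffunE; first by case: ifP.
case: ifP => // _; apply: sumr_ge0 => x _; apply: mulr_ge0 => //.
exact: trans_ge0.
Qed.

Lemma survive_abs (R : realType) (V : finType) (adj : rel V) s0 t s :
  absorbing R adj s -> survive R adj s0 t s = 0.
Proof. by case: t => [|t] /= ab; rewrite ffunE ab // andbF. Qed.

Lemma fpot_ge0 (R : realType) n (s : coloring 'I_n) : 0 <= fpot R s.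
Proof.
rewrite /fpot; apply: mulr_ge0 => //; apply: sumr_ge0 => u _; apply: sumr_ge0 => v _.
by case: (s u); case: (s v); rewrite /= ?mulr1n ?mulr0n ?subrr ?subr0 ?mulr0 ?mul0r ?mulr1.
Qed.

Lemma eq_le_R (R : realType) (a b : R) : a = b -> a <= b.
Proof. by move=> ->. Qed.

Lemma key (R : realType) n (H : (2 < n)%N) (s0 : coloring 'I_n) t :
  \sum_(0 <= k < t) \sum_s survive R (@cycle_adj n) s0 k s
  + \sum_s survive R (@cycle_adj n) s0 t s * fpot R s <= fpot R s0.
Proof.
elim: t => [|t IH].
  rewrite big_geq // add0r /= (bigD1 s0) //= big1; last first.
    by move=> s ss; rewrite ffunE (negPf ss) mul0r.
  rewrite ffunE eqxx /= addr0; case: (absorbing _ _ _) => /=; rewrite ?mul0r ?mul1r //.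
  exact: fpot_ge0.
apply: le_trans IH; rewrite big_nat_recr //= -addrA lerD2l.
set S := \sum_s survive R (@cycle_adj n) s0 t s.
have step1 : \sum_s survive R (@cycle_adj n) s0 t.+1 s * fpot R s <=
   \sum_s' (\sum_s survive R (@cycle_adj n) s0 t s * rmm_trans R (@cycle_adj n) s s') * fpot R s'.
  apply: ler_sum => s' _; rewrite /= ffunE; case: ifP => _ //.
  rewrite mul0r; apply: mulr_ge0; last exact: fpot_ge0.
  by apply: sumr_ge0 => x _; apply: mulr_ge0; [exact: survive_ge0 | exact: trans_ge0].
have step2 : \sum_s' (\sum_s survive R (@cycle_adj n) s0 t s * rmm_trans R (@cycle_adj n) s s') * fpot R s'
   = \sum_s survive R (@cycle_adj n) s0 t s * \sum_s' rmm_trans R (@cycle_adj n) s s' * fpot R s'.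
  under eq_bigr do rewrite mulr_suml.
  rewrite exchange_big /=; apply: eq_bigr => s _; rewrite mulr_sumr.
  by apply: eq_bigr => s' _; rewrite mulrA.
have step3 : \sum_s survive R (@cycle_adj n) s0 t s * \sum_s' rmm_trans R (@cycle_adj n) s s' * fpot R s'
   <= \sum_s survive R (@cycle_adj n) s0 t s * (fpot R s - 1).
  apply: ler_sum => s _; case: (boolP (absorbing R (@cycle_adj n) s)) => ab.
    by rewrite survive_abs // !mul0r.
  apply: ler_wpM2l; first exact: survive_ge0.
  apply: drift => //; apply: contra ab; exact: good_absorbing.
have step4 : \sum_s survive R (@cycle_adj n) s0 t s * (fpot R s - 1)
   = \sum_s survive R (@cycle_adj n) s0 t s * fpot R s - S.
  by rewrite /S -sumrB; apply: eq_bigr => s _; rewrite mulrBr mulr1.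
have := le_trans step1 (le_trans (eq_le_R step2) step3); rewrite step4.
lra.
Qed.

Lemma fpot_le (R : realType) n (s : coloring 'I_n) : fpot R s <= n%:R ^+ 2.
Proof.
have -> : fpot R s = 4 * ((\sum_u (s u)%:R) * (n%:R - \sum_u (s u)%:R)).
  by rewrite /fpot sum_quad.
set B := \sum_u _.
have := sqr_ge0 (n%:R - 2 * B); nra.
Qed.

Theorem theorem2p5 (R : realType) :
  exists c : R, 0 < c /\
    forall n : nat, (3 <= n)%N ->
      forall s0 : coloring 'I_n,
        (stab_time R (@cycle_adj n) s0 <= (c * (n%:R) ^+ 2)%:E)%E.
Proof.
exists 1; split => // n H s0; rewrite mul1r /stab_time.
apply: lime_le.
  by apply: is_cvg_nneseries => k _ _; rewrite lee_fin sumr_ge0 // => s _; apply: survive_ge0.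
apply: nearW => k; rewrite sumEFin lee_fin.
apply: (le_trans _ (fpot_le R s0)).
have K := key R H s0 k.
have P : 0 <= \sum_s survive R (@cycle_adj n) s0 k s * fpot R s.
  by apply: sumr_ge0 => s _; apply: mulr_ge0; [exact: survive_ge0 | exact: fpot_ge0].
lra.
Qed.
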